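(* There is $C>0$ (depending only on $R$) such that for all $\varepsilon\in(0,1]$, $$\langle\hat h_\varepsilon,-\Delta_{S^2}\hat h_\varepsilon\rangle_{L^2(S^2)}\le C\varepsilon .$$
   Context: Setup: fix $R>0$, $\tau=0$. $\hat h_\varepsilon(w)=\tilde h_\varepsilon(\varepsilon w)$, where $\tilde h_\varepsilon=h_\varepsilon-\log|\frac{z-\varepsilon}{z+\varepsilon}|^2$ and $h_\varepsilon=\log|u|^2$ for the gauged $\mathbb{P}^1$ vortex-antivortex pair on the round sphere $S^2_R$ (metric $\frac{4R^2}{(1+|z|^2)^2}dzd\bar z$) with vortex at $z=\varepsilon$, antivortex at $z=-\varepsilon$; $\hat h_\varepsilon$ is a smooth function on $S^2$ satisfying $-\Delta_{S^2}\hat h+2R^2\varepsilon^2f_\varepsilon(w)^2F(w,\hat h)=0$ with $f_\varepsilon(w)=\frac{1+|w|^2}{1+\varepsilon^2|w|^2}$ and $F(w,v)=\frac{|w-1|^2e^v-|w+1|^2}{|w-1|^2e^v+|w+1|^2}$. Here $S^2$ is the unit round sphere in the stereographic coordinate $w$ (area form $\frac{4\,d^2w}{(1+|w|^2)^2}$) and $\Delta_{S^2}=\frac{(1+|w|^2)^2}{4}\nabla^2_w$ is its (negative semidefinite) Laplacian. *)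

(* Defs.v *)
From Stdlib Require Import Reals.
Open Scope R_scope.

(* Functions on S^2 are written in the stereographic coordinate w = x + i y,
   i.e. as functions R -> R -> R. *)

Definition cont2 (f : R -> R -> R) : Prop :=
  forall x y eps, 0 < eps -> exists d, 0 < d /\
    forall x' y', Rabs (x' - x) < d -> Rabs (y' - y) < d ->
      Rabs (f x' y' - f x y) < eps.

Fixpoint Ck (k : nat) (f : R -> R -> R) : Prop :=
  match k with
  | O => cont2 f
  | S k' => cont2 f /\ exists fx fy : R -> R -> R,
      (forall x y, derivable_pt_lim (fun t => f t y) x (fx x y)) /\
      (forall x y, derivable_pt_lim (fun t => f x t) y (fy x y)) /\
      Ck k' fx /\ Ck k' fy
  end.

Definition smooth2 (f : R -> R -> R) : Prop := forall k, Ck k f.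

(* smooth function on S^2: smooth in the chart w and in the chart 1/w
   (i.e. h(1/w) extends smoothly across w = 0 (the point at infinity)). *)
Definition smooth_on_S2 (h : R -> R -> R) : Prop :=
  smooth2 h /\
  exists g : R -> R -> R, smooth2 g /\
    forall u v, (u <> 0 \/ v <> 0) ->
      g u v = h (u / (u ^ 2 + v ^ 2)) (- v / (u ^ 2 + v ^ 2)).

Definition is_flat_laplacian (f L : R -> R -> R) : Prop :=
  exists fx fy : R -> R -> R,
    (forall x y, derivable_pt_lim (fun t => f t y) x (fx x y)) /\
    (forall x y, derivable_pt_lim (fun t => f x t) y (fy x y)) /\
    forall x y, exists a b,
      derivable_pt_lim (fun t => fx t y) x a /\
      derivable_pt_lim (fun t => fy x t) y b /\
      L x y = a + b.

(* Delta_{S^2} = (1+|w|^2)^2/4 * nabla_w^2 *)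
Definition lapS2 (L : R -> R -> R) (x y : R) : R :=
  (1 + x ^ 2 + y ^ 2) ^ 2 / 4 * L x y.

Definition areaS2 (x y : R) : R := 4 / (1 + x ^ 2 + y ^ 2) ^ 2.

Definition f_eps (eps x y : R) : R :=
  (1 + (x ^ 2 + y ^ 2)) / (1 + eps ^ 2 * (x ^ 2 + y ^ 2)).

Definition Fwv (x y v : R) : R :=
  (((x - 1) ^ 2 + y ^ 2) * exp v - ((x + 1) ^ 2 + y ^ 2)) /
  (((x - 1) ^ 2 + y ^ 2) * exp v + ((x + 1) ^ 2 + y ^ 2)).

(* the vortex-antivortex equation for hat h_eps (tau = 0):
   -Delta_{S^2} h + 2 R^2 eps^2 f_eps^2 F(w,h) = 0 *)
Definition hat_h_equation (Rad eps : R) (h L : R -> R -> R) : Prop :=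
  forall x y, - lapS2 L x y + 2 * Rad ^ 2 * eps ^ 2 * (f_eps eps x y) ^ 2
                * Fwv x y (h x y) = 0.

Definition square_integral (f : R -> R -> R) (r I : R) : Prop :=
  exists G : R -> R,
    (forall x, -r <= x <= r ->
       exists pr : Riemann_integrable (f x) (- r) r, RiemannInt pr = G x) /\
    exists pr : Riemann_integrable G (- r) r, RiemannInt pr = I.

Definition plane_integral (f : R -> R -> R) (I : R) : Prop :=
  forall e, 0 < e -> exists r0, 0 < r0 /\ forall r, r0 <= r ->
    exists Ir, square_integral f r Ir /\ Rabs (Ir - I) < e.

(* < h, -Delta_{S^2} h >_{L^2(S^2)} = I, written in the chart w with the
   round area form 4 d^2w/(1+|w|^2)^2 (the point at infinity has measure 0) *)
Definition L2S2_pairing_minus_lap (h L : R -> R -> R) (I : R) : Prop :=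
  plane_integral (fun x y => h x y * (- lapS2 L x y) * areaS2 x y) I.

(* Main.v *)
Require Import Defs.
From Stdlib Require Import Reals Lra Psatz ZArith Classical FunctionalExtensionality.
From Coquelicot Require Import Coquelicot.
Open Scope R_scope.


Definition ct2 (f : R -> R -> R) := forall x y, continuity_2d_pt f x y.

Lemma ct2_cont2 f : cont2 f -> ct2 f.
Proof. intros H x y eps. destruct (H x y eps (cond_pos eps)) as [d [Hd Hd']].
 exists (mkposreal d Hd). intros u v Hu Hv. apply Hd'; auto. Qed.

Lemma ct2_sec f x y0 : ct2 f -> continuity_pt (fun y => f x y) y0.
Proof. intros H. apply continuity_pt_locally. intros eps.
 destruct (H x y0 eps) as [d Hd]. exists d. intros u Hu. apply Hd.
 rewrite Rminus_eq_0, Rabs_R0. apply cond_pos. exact Hu. Qed.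

Lemma cpt_cont (f : R -> R) x : continuity_pt f x -> continuous f x.
Proof. intros H. apply continuity_pt_filterlim. exact H. Qed.

Lemma ex_RInt_cpt (f : R -> R) a b : (forall x, continuity_pt f x) -> ex_RInt f a b.
Proof. intros H. apply (ex_RInt_continuous (V:=R_CompleteNormedModule)). intros z _. apply cpt_cont, H. Qed.

Lemma RInt_minusR f g a b : ex_RInt f a b -> ex_RInt g a b ->
  RInt (fun x => f x - g x) a b = RInt f a b - RInt g a b.
Proof. intros H1 H2. exact (RInt_minus f g a b H1 H2). Qed.

Lemma RInt_plusR f g a b : ex_RInt f a b -> ex_RInt g a b ->
  RInt (fun x => f x + g x) a b = RInt f a b + RInt g a b.
Proof. intros H1 H2. exact (RInt_plus f g a b H1 H2). Qed.

Lemma RInt_scalR f k a b : ex_RInt f a b ->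
  RInt (fun x => k * f x) a b = k * RInt f a b.
Proof. intros H1. exact (RInt_scal f a b k H1). Qed.

Lemma G_cont f r x0 : ct2 f -> 0 <= r ->
  continuity_pt (fun x => RInt (fun y => f x y) (-r) r) x0.
Proof.
  intros Hf Hr. apply continuity_pt_locally. intros eps.
  assert (Hp : 0 < eps / (2*r+1)) by (apply Rdiv_lt_0_compat; [apply cond_pos|lra]).
  destruct (uniform_continuity_2d f (x0-1) (x0+1) (-r) r
     (fun x y _ _ => Hf x y) (mkposreal _ Hp)) as [d Hd].
  assert (Hm : 0 < Rmin 1 d) by (apply Rmin_pos; [lra|apply cond_pos]).
  exists (mkposreal _ Hm). intros u Hu. simpl in Hu.
  change (Rabs (u - x0) < Rmin 1 d) in Hu.
  pose proof (Rmin_l 1 d). pose proof (Rmin_r 1 d).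
  rewrite <- RInt_minusR by (apply ex_RInt_cpt; intros; apply ct2_sec; auto).
  eapply Rle_lt_trans. apply abs_RInt_le_const with (M := eps / (2*r+1)). lra.
  apply ex_RInt_cpt. intros. apply continuity_pt_minus; apply ct2_sec; auto.
  intros t Ht. apply Rlt_le. destruct (Rabs_def2 _ _ Hu).
  apply (Hd x0 t u t); try lra.
  apply Rabs_def1; lra.
  replace ((r - - r) * (eps / (2 * r + 1))) with (eps * (2*r/(2*r+1))) by (field; lra).
  pose proof (cond_pos eps).
  assert (2*r/(2*r+1) < 1). { unfold Rdiv. apply (Rmult_lt_reg_r (2*r+1)). lra. rewrite Rmult_assoc, Rinv_l by lra. lra. }
  nra.
Qed.

Definition SI (f : R -> R -> R) (r : R) : R :=
  RInt (fun x => RInt (fun y => f x y) (-r) r) (-r) r.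

Lemma ex_sec f x a b : ct2 f -> ex_RInt (fun y => f x y) a b.
Proof. intros H. apply ex_RInt_cpt. intros; apply ct2_sec; auto. Qed.

Lemma ex_G f r a b : ct2 f -> 0 <= r -> ex_RInt (fun x => RInt (fun y => f x y) (-r) r) a b.
Proof. intros H Hr. apply ex_RInt_cpt. intros; apply G_cont; auto. Qed.

Lemma SI_square f r : ct2 f -> 0 <= r -> square_integral f r (SI f r).
Proof.
  intros Hf Hr. exists (fun x => RInt (fun y => f x y) (-r) r). split.
  - intros x _. exists (ex_RInt_Reals_0 _ _ _ (ex_sec f x (-r) r Hf)).
    rewrite <- RInt_Reals. reflexivity.
  - exists (ex_RInt_Reals_0 _ _ _ (ex_G f r (-r) r Hf Hr)).
    rewrite <- RInt_Reals. reflexivity.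
Qed.

Lemma ct2_minus f g : ct2 f -> ct2 g -> ct2 (fun x y => f x y - g x y).
Proof. intros H1 H2 x y. apply continuity_2d_pt_minus; auto. Qed.
Lemma ct2_plus f g : ct2 f -> ct2 g -> ct2 (fun x y => f x y + g x y).
Proof. intros H1 H2 x y. apply continuity_2d_pt_plus; auto. Qed.
Lemma ct2_mult f g : ct2 f -> ct2 g -> ct2 (fun x y => f x y * g x y).
Proof. intros H1 H2 x y. apply continuity_2d_pt_mult; auto. Qed.
Lemma ct2_const c : ct2 (fun _ _ => c).
Proof. intros x y. apply continuity_2d_pt_const. Qed.
Lemma ct2_sep (al be : R -> R) : (forall x, continuity_pt al x) -> (forall x, continuity_pt be x) ->
  ct2 (fun x y => al x * be y).
Proof. intros H1 H2 x y. apply continuity_2d_pt_mult.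
  apply (continuity_1d_2d_pt_comp al (fun u v => u)). auto. apply continuity_2d_pt_id1.
  apply (continuity_1d_2d_pt_comp be (fun u v => v)). auto. apply continuity_2d_pt_id2.
Qed.

Lemma SI_minus f g r : ct2 f -> ct2 g -> 0 <= r ->
  SI (fun x y => f x y - g x y) r = SI f r - SI g r.
Proof. intros H1 H2 Hr. unfold SI.
  rewrite <- RInt_minusR by (apply ex_G; auto).
  apply RInt_ext. intros x _. apply RInt_minusR; apply ex_sec; auto. Qed.

Lemma SI_plus f g r : ct2 f -> ct2 g -> 0 <= r ->
  SI (fun x y => f x y + g x y) r = SI f r + SI g r.
Proof. intros H1 H2 Hr. unfold SI.
  rewrite <- RInt_plusR by (apply ex_G; auto).
  apply RInt_ext. intros x _. apply RInt_plusR; apply ex_sec; auto. Qed.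

Lemma SI_scal f k r : ct2 f -> 0 <= r ->
  SI (fun x y => k * f x y) r = k * SI f r.
Proof. intros H1 Hr. unfold SI.
  rewrite <- RInt_scalR by (apply ex_G; auto).
  apply RInt_ext. intros x _. apply RInt_scalR; apply ex_sec; auto. Qed.

Lemma SI_le f g r : ct2 f -> ct2 g -> 0 <= r -> (forall x y, f x y <= g x y) ->
  SI f r <= SI g r.
Proof. intros H1 H2 Hr Hle. unfold SI. apply RInt_le. lra.
  apply ex_G; auto. apply ex_G; auto.
  intros x _. apply RInt_le. lra. apply ex_sec; auto. apply ex_sec; auto.
  intros; auto. Qed.

Lemma SI_sep al be r : (forall x, continuity_pt al x) -> (forall x, continuity_pt be x) ->
  SI (fun x y => al x * be y) r = RInt al (-r) r * RInt be (-r) r.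
Proof. intros H1 H2. unfold SI.
  rewrite (RInt_ext _ (fun x => RInt be (-r) r * al x)).
  - rewrite RInt_scalR by (apply ex_RInt_cpt; auto). apply Rmult_comm.
  - intros x _. rewrite RInt_scalR by (apply ex_RInt_cpt; auto). apply Rmult_comm. Qed.

Lemma RInt_mono_int (g : R -> R) r s : (forall x, continuity_pt g x) -> (forall x, 0 <= g x) ->
  0 <= r <= s -> RInt g (-r) r <= RInt g (-s) s.
Proof. intros Hc Hp Hrs.
  assert (E : forall a b, ex_RInt g a b) by (intros; apply ex_RInt_cpt; auto).
  rewrite <- (RInt_Chasles g (-s) (-r) s (E _ _) (E _ _)).
  rewrite <- (RInt_Chasles g (-r) r s (E _ _) (E _ _)).
  assert (0 <= RInt g (-s) (-r)) by (apply RInt_ge_0; auto; lra).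
  assert (0 <= RInt g r s) by (apply RInt_ge_0; auto; lra).
  change (RInt g (- r) r <= RInt g (- s) (- r) + (RInt g (- r) r + RInt g r s)). lra. Qed.

Lemma SI_mono f r s : ct2 f -> (forall x y, 0 <= f x y) -> 0 <= r <= s -> SI f r <= SI f s.
Proof. intros Hc Hp Hrs. unfold SI.
  eapply Rle_trans. apply RInt_mono_int with (s := s).
  intros; apply G_cont; auto; lra.
  intros x. apply RInt_ge_0. lra. apply ex_sec; auto. intros; auto. auto.
  apply RInt_le. lra. apply ex_G; auto; lra. apply ex_G; auto; lra.
  intros x _. apply RInt_mono_int. intros; apply ct2_sec; auto. auto. auto.
Qed.


Lemma mono_lim (g : R -> R) B : (forall r s, 0 <= r <= s -> g r <= g s) ->
  (forall r, 0 <= r -> g r <= B) ->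
  exists l, forall e, 0 < e -> exists r0, 0 < r0 /\ forall r, r0 <= r -> Rabs (g r - l) < e.
Proof.
  intros Hm Hb.
  set (E := fun z => exists r, 0 <= r /\ z = g r).
  destruct (completeness E) as [l [Hub Hlub]].
  - exists B. intros z [r [Hr ->]]. auto.
  - exists (g 0), 0. split; auto; lra.
  - exists l. intros e He.
    destruct (classic (exists r, 0 <= r /\ l - e < g r)) as [[r1 [Hr1 Hg1]] | Hn].
    + exists (r1 + 1). split. lra. intros r Hr.
      assert (g r1 <= g r) by (apply Hm; lra).
      assert (g r <= l) by (apply Hub; exists r; split; auto; lra).
      apply Rabs_def1; lra.
    + exfalso. assert (l <= l - e). apply Hlub. intros z [r [Hr ->]].
      apply Rnot_lt_le. intros Hc. apply Hn. exists r; auto. lra.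
Qed.

Lemma lim_le (g : R -> R) l c : (forall e, 0 < e -> exists r0, 0 < r0 /\ forall r, r0 <= r -> Rabs (g r - l) < e) ->
  (forall r, 0 <= r -> g r <= c) -> l <= c.
Proof. intros Hl Hc. apply Rnot_lt_le. intros H.
  destruct (Hl (l - c)) as [r0 [Hr0 Hr]]. lra.
  specialize (Hr r0 (Rle_refl _)). specialize (Hc r0 ltac:(lra)).
  apply Rabs_def2 in Hr. lra. Qed.

Lemma plane_from_bound (K P : R -> R -> R) B c : ct2 K -> ct2 P ->
  (forall x y, Rabs (K x y) <= P x y) -> (forall r, 0 <= r -> SI P r <= B) ->
  (forall r, 0 <= r -> SI K r <= c) ->
  exists I, plane_integral K I /\ I <= c.
Proof.
  intros HK HP Hb HB Hc.
  assert (HQ : ct2 (fun x y => P x y + K x y)) by (apply ct2_plus; auto).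
  assert (HPp : forall x y, 0 <= P x y) by (intros x y; eapply Rle_trans; [apply Rabs_pos|apply Hb]).
  assert (HQp : forall x y, 0 <= P x y + K x y).
  { intros x y. specialize (Hb x y). apply Rabs_le_between in Hb. lra. }
  destruct (mono_lim (SI (fun x y => P x y + K x y)) (2*B)) as [l1 H1].
  { intros r s Hrs. apply SI_mono; auto. }
  { intros r Hr. rewrite SI_plus by auto.
    assert (SI K r <= SI P r). { apply SI_le; auto. intros x y. specialize (Hb x y). apply Rabs_le_between in Hb. lra. }
    specialize (HB r Hr). lra. }
  destruct (mono_lim (SI P) B) as [l2 H2].
  { intros r s Hrs. apply SI_mono; auto. }
  { auto. }
  assert (HL : forall e, 0 < e -> exists r0, 0 < r0 /\ forall r, r0 <= r -> Rabs (SI K r - (l1 - l2)) < e).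
  { intros e He. destruct (H1 (e/2)) as [r1 [Hr1 H1']]. lra.
    destruct (H2 (e/2)) as [r2 [Hr2 H2']]. lra.
    exists (Rmax r1 r2). split. apply (Rlt_le_trans _ r1); auto; apply Rmax_l.
    intros r Hr. pose proof (Rmax_l r1 r2). pose proof (Rmax_r r1 r2).
    specialize (H1' r ltac:(lra)). specialize (H2' r ltac:(lra)).
    rewrite SI_plus in H1' by (auto; lra).
    apply Rabs_def2 in H1'. apply Rabs_def2 in H2'. apply Rabs_def1; lra. }
  exists (l1 - l2). split.
  - intros e He. destruct (HL e He) as [r0 [Hr0 H]]. exists r0. split; auto.
    intros r Hr. exists (SI K r). split. apply SI_square; auto; lra. auto.
  - apply (lim_le (SI K)); auto.
Qed.


Lemma exd_cpt (f : R -> R) x : ex_derive f x -> continuity_pt f x.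
Proof. intros H. apply continuity_pt_filterlim.
  exact (ex_derive_continuous (K:=R_AbsRing) (V:=R_NormedModule) f x H). Qed.

Definition Ec (c t : R) := / (1 + c^2 * t^2).

Lemma Ec_cont c x : continuity_pt (Ec c) x.
Proof. apply exd_cpt.
  unfold Ec. auto_derive. nra. Qed.

Lemma Ec_pos c x : 0 < Ec c x.
Proof. unfold Ec. apply Rinv_0_lt_compat. nra. Qed.

Lemma int_E c r : 0 < c -> 0 <= r -> 0 <= RInt (Ec c) (-r) r <= PI / c.
Proof.
  intros Hc Hr. split.
  - apply RInt_ge_0. lra. apply ex_RInt_cpt, Ec_cont. intros; apply Rlt_le, Ec_pos.
  - rewrite (is_RInt_unique (Ec c) (-r) r ((fun t => atan (c*t) / c) r - (fun t => atan (c*t)/c) (-r))).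
    + cbv beta. pose proof (atan_bound (c*r)). pose proof (atan_bound (c*(-r))).
      unfold Rdiv. rewrite <- Rmult_minus_distr_r. apply Rmult_le_compat_r.
      apply Rlt_le, Rinv_0_lt_compat; auto. lra.
    + apply (is_RInt_derive (V:=R_CompleteNormedModule) (fun t => atan (c*t)/c)).
      * intros x _. unfold Ec. auto_derive. auto. field; repeat split; nra.
      * intros x _. apply cpt_cont, Ec_cont.
Qed.

Definition lam (s t : R) := ln ((t^2 + (s+2)^2) / (t^2 + s^2)) / 2.
Definition Alam (s t : R) := t * ln ((t^2 + (s+2)^2) / (t^2 + s^2)) + 2*(s+2)*atan (t/(s+2)) - 2*s*atan (t/s).

Lemma lam_cont s x : 0 < s -> continuity_pt (lam s) x.
Proof. intros Hs. apply exd_cpt.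
  unfold lam. auto_derive. split. nra. split; auto. apply Rmult_lt_0_compat; [nra| apply Rinv_0_lt_compat; nra]. Qed.

Lemma lam_pos s x : 0 < s -> 0 <= lam s x.
Proof. intros Hs. unfold lam. apply Rmult_le_pos; [|lra].
  rewrite <- ln_1. apply ln_le. lra. apply (Rmult_le_reg_r (x^2+s^2)). nra.
  unfold Rdiv. rewrite Rmult_assoc, Rinv_l by nra. nra. Qed.

Lemma Alam_deriv s x : 0 < s -> is_derive (Alam s) x (2 * lam s x).
Proof. intros Hs. unfold Alam, lam. auto_derive.
  - split. nra. split; auto. apply Rmult_lt_0_compat; [nra| apply Rinv_0_lt_compat; nra].
  - replace (x^2) with (x*(x*1)) by ring. replace ((s+2)^2) with ((s+2)*((s+2)*1)) by ring.
    replace (s^2) with (s*(s*1)) by ring. unfold Rdiv.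
    set (LL := ln _). field. repeat split; try nra. Qed.

Lemma ln_le_sub1 y : 0 < y -> ln y <= y - 1.
Proof. intros H. pose proof (exp_ineq1_le (ln y)). rewrite exp_ln in H0 by auto. lra. Qed.

Lemma ulnu u : 0 < u -> u * ln (/ u) <= 1.
Proof. intros H. pose proof (ln_le_sub1 (/u) (Rinv_0_lt_compat _ H)).
  assert (u * ln (/u) <= u * (/u - 1)) by (apply Rmult_le_compat_l; lra).
  rewrite Rmult_minus_distr_l, Rinv_r in H1 by lra. lra. Qed.

Lemma tlnQ s t : 0 < s <= 1 -> Rabs (t * ln ((t^2 + (s+2)^2) / (t^2 + s^2))) <= 11.
Proof.
  intros Hs. set (Q := (t^2 + (s+2)^2) / (t^2 + s^2)).
  assert (HQ1 : 1 <= Q). { unfold Q. apply (Rmult_le_reg_r (t^2+s^2)). nra.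
    unfold Rdiv. rewrite Rmult_assoc, Rinv_l by nra. nra. }
  assert (Hl0 : 0 <= ln Q) by (rewrite <- ln_1; apply ln_le; lra).
  rewrite Rabs_mult. rewrite (Rabs_right (ln Q)) by lra.
  destruct (Req_dec t 0) as [->|Ht0].
  { rewrite Rabs_R0. lra. }
  pose proof (Rabs_pos_lt t Ht0) as Hat. pose proof (pow2_abs t) as Ht2.
  destruct (Rle_lt_dec 1 (Rabs t)) as [H1|H1].
  - pose proof (ln_le_sub1 Q ltac:(lra)).
    assert (Q - 1 <= 8 / (Rabs t ^ 2)).
    { unfold Q. rewrite Ht2. unfold Rdiv. apply (Rmult_le_reg_r (t^2+s^2)). nra.
      rewrite Rmult_minus_distr_r, Rmult_assoc, Rinv_l by nra.
      rewrite Rmult_assoc. rewrite <- Ht2. apply (Rmult_le_reg_l (Rabs t ^2)). nra.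
      replace (Rabs t ^ 2 * (8 * (/ Rabs t ^ 2 * (Rabs t ^ 2 + s ^ 2)))) with (8 * (Rabs t ^ 2 + s^2)) by (field; lra).
      rewrite Ht2. nra. }
    assert (Rabs t * ln Q <= Rabs t * (8 / Rabs t ^ 2)) by (apply Rmult_le_compat_l; lra).
    replace (Rabs t * (8 / Rabs t ^ 2)) with (8 / Rabs t) in H2 by (field; lra).
    assert (8 / Rabs t <= 8). { apply (Rmult_le_reg_r (Rabs t)). lra. unfold Rdiv. rewrite Rmult_assoc, Rinv_l by lra. nra. }
    lra.
  - assert (HQ : Q <= 10 * (/ Rabs t * / Rabs t)).
    { unfold Q. apply (Rmult_le_reg_r (t^2+s^2)). nra.
      unfold Rdiv. rewrite Rmult_assoc, Rinv_l by nra.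
      apply (Rmult_le_reg_l (Rabs t * Rabs t)). nra.
      replace (Rabs t * Rabs t * (10 * (/ Rabs t * / Rabs t) * (t ^ 2 + s ^ 2))) with (10 * (t^2 + s^2)) by (field; lra).
      rewrite <- Ht2. assert (Rabs t ^ 2 <= 1) by nra. assert ((s+2)^2 <= 9) by nra. assert (0 <= s^2) by nra. nra. }
    assert (ln Q <= ln 10 + ln (/ Rabs t) + ln (/ Rabs t)).
    { assert (Hi : 0 < / Rabs t) by (apply Rinv_0_lt_compat; lra).
      rewrite <- (ln_mult 10 (/Rabs t)) by lra. rewrite <- ln_mult by nra.
      apply ln_le. lra. rewrite !Rmult_assoc. exact HQ. }
    pose proof (ln_le_sub1 10 ltac:(lra)). pose proof (ulnu (Rabs t) Hat).
    assert (0 <= ln 10) by (rewrite <- ln_1; apply ln_le; lra).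
    assert (Rabs t * ln Q <= Rabs t * (ln 10 + ln (/ Rabs t) + ln (/ Rabs t))) by (apply Rmult_le_compat_l; lra).
    nra.
Qed.

Lemma Alam_bound s t : 0 < s <= 1 -> Rabs (Alam s t) <= 27.
Proof.
  intros Hs. unfold Alam. pose proof (tlnQ s t Hs).
  pose proof (atan_bound (t/(s+2))). pose proof (atan_bound (t/s)). pose proof PI_4.
  set (u := t * ln _) in *. apply Rabs_le_between in H. apply Rabs_le_between. nra.
Qed.

Lemma int_lam s c d : 0 < s <= 1 -> RInt (lam s) c d <= 27.
Proof.
  intros Hs.
  rewrite (is_RInt_unique (lam s) c d ((Alam s d - Alam s c) / 2)).
  - pose proof (Alam_bound s c Hs). pose proof (Alam_bound s d Hs).
    apply Rabs_le_between in H. apply Rabs_le_between in H0. lra.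
  - replace ((Alam s d - Alam s c) / 2) with ((fun t => Alam s t / 2) d - (fun t => Alam s t / 2) c) by (simpl; field).
    apply (is_RInt_derive (V:=R_CompleteNormedModule) (fun t => Alam s t / 2)).
    + intros x _. apply (is_derive_ext (fun t => /2 * Alam s t)). intros; simpl; field.
      replace (lam s x) with (/2 * (2 * lam s x)) by field. apply is_derive_scal. apply Alam_deriv. lra.
    + intros x _. apply cpt_cont, lam_cont. lra.
Qed.

Lemma int_lam_shift s v r : 0 < s <= 1 -> 0 <= r -> RInt (fun x => lam s (x + v)) (-r) r <= 27.
Proof.
  intros Hs Hr.
  pose proof (RInt_comp_lin (V:=R_CompleteNormedModule) (lam s) 1 v (-r) r (ex_RInt_cpt _ _ _ (fun x => lam_cont s x (proj1 Hs)))).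
  eapply Rle_trans; [|apply (int_lam s (1 * - r + v) (1 * r + v) Hs)].
  rewrite <- H. apply Req_le. apply RInt_ext. intros x _. change (lam s (x+v) = 1 * lam s (1*x+v)). rewrite !Rmult_1_l. reflexivity.
Qed.


Definition phi (a b v : R) := - ((a * exp v - b) / (a * exp v + b)) * v.

Lemma div_le_div X Y p q : 0 < p -> 0 < q -> X * q <= Y * p -> X / p <= Y / q.
Proof. intros Hp Hq H. unfold Rdiv.
  replace (X * / p) with (X * q * / (p * q)) by (field; lra).
  replace (Y * / q) with (Y * p * / (p * q)) by (field; lra).
  apply Rmult_le_compat_r; [left; apply Rinv_0_lt_compat; nra | lra]. Qed.

Lemma exp_ge1 v : 0 <= v -> 1 <= exp v.
Proof. intros. pose proof (exp_ineq1_le v). lra. Qed.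
Lemma exp_le1 v : v <= 0 -> exp v <= 1.
Proof. intros. destruct (Req_dec v 0). subst; rewrite exp_0; lra.
  rewrite <- exp_0. left. apply exp_increasing. lra. Qed.

Lemma Fabs a b v : 0 <= a -> 0 <= b -> 0 < a + b -> Rabs ((a * exp v - b) / (a * exp v + b)) <= 1.
Proof. intros Ha Hb Hab. pose proof (exp_pos v).
  assert (HA : 0 < a * exp v + b). { destruct (Req_dec a 0). subst. lra. nra. }
  unfold Rdiv. rewrite Rabs_mult, Rabs_inv, (Rabs_right (a*exp v + b)) by lra.
  apply (Rmult_le_reg_r (a * exp v + b)). lra. rewrite Rmult_assoc, Rinv_l by lra.
  rewrite Rmult_1_r, Rmult_1_l. apply Rabs_le. split; nra. Qed.

Lemma phi_M a b v M : 0 <= a -> 0 <= b -> 0 < a + b -> Rabs v <= M -> Rabs (phi a b v) <= M.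
Proof. intros. unfold phi. rewrite Rabs_mult, Rabs_Ropp.
  pose proof (Fabs a b v H H0 H1). pose proof (Rabs_pos v).
  pose proof (Rabs_pos ((a * exp v - b) / (a * exp v + b))). nra. Qed.

Lemma P1 a b v : 0 <= a -> 0 <= b -> 0 < a + b -> phi a b v <= Rabs v * (Rabs (b - a) / (a + b)).
Proof.
  intros Ha Hb Hab. unfold phi. pose proof (exp_pos v) as He. set (e := exp v) in *.
  assert (HA : 0 < a * e + b). { destruct (Req_dec a 0). subst. lra. nra. }
  destruct (Rle_lt_dec 0 v) as [Hv|Hv].
  - assert (1 <= e) by (apply exp_ge1; auto).
    rewrite Rabs_right by lra.
    assert ((b - a * e) / (a * e + b) <= Rabs (b - a) / (a + b)).
    { apply div_le_div; auto. pose proof (Rle_abs (b - a)).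
      assert (0 <= a * b * (e - 1)) by (apply Rmult_le_pos; nra).
      assert ((b - a) * (a*e+b) <= Rabs (b-a) * (a*e+b)) by (apply Rmult_le_compat_r; lra).
      nra. }
    replace (- ((a * e - b) / (a * e + b)) * v) with (v * ((b - a*e)/(a*e+b))) by (field; lra).
    apply Rmult_le_compat_l; auto.
  - assert (e <= 1) by (apply exp_le1; lra).
    rewrite Rabs_left by lra.
    assert ((a * e - b) / (a * e + b) <= Rabs (b - a) / (a + b)).
    { apply div_le_div; auto. rewrite Rabs_minus_sym. pose proof (Rle_abs (a - b)).
      assert (0 <= a * b * (1 - e)) by (apply Rmult_le_pos; nra).
      assert ((a - b) * (a*e+b) <= Rabs (a-b) * (a*e+b)) by (apply Rmult_le_compat_r; lra).
      nra. }
    replace (- ((a * e - b) / (a * e + b)) * v) with (-v * ((a*e - b)/(a*e+b))) by (field; lra).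
    apply Rmult_le_compat_l; lra.
Qed.

Lemma P2 a b v : 0 < a -> 0 < b -> 0 < phi a b v -> Rabs v <= Rabs (ln b - ln a).
Proof.
  intros Ha Hb Hp. unfold phi in Hp. pose proof (exp_pos v) as He.
  assert (HA : 0 < a * exp v + b) by nra.
  assert (Hl : ln (a * exp v) = ln a + v) by (rewrite ln_mult, ln_exp by lra; auto).
  destruct (Rtotal_order v 0) as [Hv|[Hv|Hv]].
  - assert (b < a * exp v).
    { apply Rnot_le_lt. intros Hc. assert (0 <= - ((a * exp v - b) / (a * exp v + b))).
      { unfold Rdiv. rewrite Ropp_mult_distr_l. apply Rmult_le_pos. lra. left; apply Rinv_0_lt_compat; lra. }
      nra. }
    assert (ln b < ln (a * exp v)) by (apply ln_increasing; lra).
    rewrite Rabs_left by lra. apply Rle_trans with (ln a - ln b). lra.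
    rewrite Rabs_minus_sym. apply Rle_abs.
  - subst. rewrite Rmult_0_r in Hp. lra.
  - assert (a * exp v < b).
    { apply Rnot_le_lt. intros Hc. assert (0 <= ((a * exp v - b) / (a * exp v + b))).
      { unfold Rdiv. apply Rmult_le_pos. lra. left; apply Rinv_0_lt_compat; lra. }
      nra. }
    assert (ln (a * exp v) < ln b) by (apply ln_increasing; nra).
    rewrite Rabs_right by lra. apply Rle_trans with (ln b - ln a). lra. apply Rle_abs.
Qed.



Lemma ln_diff_le a b : 0 < a -> 0 < b -> ln b - ln a <= (b - a) / a.
Proof. intros Ha Hb.
  assert (Hi : 0 < / a) by (apply Rinv_0_lt_compat; auto).
  assert (E : ln b - ln a = ln (b * / a)) by (rewrite ln_mult, ln_Rinv by auto; ring).
  rewrite E. replace ((b - a) / a) with (b * / a - 1) by (field; lra).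
  apply ln_le_sub1. apply Rmult_lt_0_compat; auto. Qed.

Lemma farL P x v : 0 < P -> 4 * Rabs x <= P -> phi (P - 2*x) (P + 2*x) v <= 16 * x^2 / P^2.
Proof.
  intros HP Hx.
  assert (Hxx : - P / 4 <= x <= P / 4) by (pose proof (Rle_abs x); pose proof (Rle_abs (-x)); rewrite Rabs_Ropp in *; lra).
  assert (Ha : 0 < P - 2*x) by lra. assert (Hb : 0 < P + 2*x) by lra.
  assert (HR : 0 <= 16 * x^2 / P^2) by (apply Rmult_le_pos; [nra| left; apply Rinv_0_lt_compat; nra]).
  destruct (Rle_lt_dec (phi (P - 2*x) (P + 2*x) v) 0) as [H|H]. lra.
  pose proof (P2 _ _ v Ha Hb H) as Hv.
  assert (Hln : Rabs (ln (P + 2*x) - ln (P - 2*x)) <= 8 * Rabs x / P).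
  { apply Rabs_le. pose proof (ln_diff_le _ _ Ha Hb). pose proof (ln_diff_le _ _ Hb Ha).
    split.
    - assert ((P - 2 * x - (P + 2 * x)) / (P + 2 * x) <= 8 * Rabs x / P).
      { apply div_le_div; auto. destruct (Rcase_abs x) as [Hc|Hc];
        [rewrite Rabs_left by lra | rewrite Rabs_right by lra]; nra. }
      lra.
    - eapply Rle_trans. apply H0. apply div_le_div; auto. destruct (Rcase_abs x) as [Hc|Hc];
        [rewrite Rabs_left by lra | rewrite Rabs_right by lra]; nra. }
  pose proof (P1 (P - 2*x) (P + 2*x) v ltac:(lra) ltac:(lra) ltac:(lra)) as Hp1.
  replace (P + 2 * x - (P - 2 * x)) with (4 * x) in Hp1 by ring.
  replace (P - 2 * x + (P + 2 * x)) with (2 * P) in Hp1 by ring.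
  rewrite Rabs_mult, (Rabs_right 4) in Hp1 by lra.
  assert (Hq : 0 <= 4 * Rabs x / (2 * P)) by (apply Rmult_le_pos; [pose proof (Rabs_pos x); lra| left; apply Rinv_0_lt_compat; lra]).
  assert (Rabs v * (4 * Rabs x / (2 * P)) <= 8 * Rabs x / P * (4 * Rabs x / (2 * P))) by (apply Rmult_le_compat_r; lra).
  replace (8 * Rabs x / P * (4 * Rabs x / (2 * P))) with (16 * (Rabs x)^2 / P^2) in H0 by (field; lra).
  rewrite pow2_abs in H0. lra.
Qed.


Lemma absle z M : Rabs z <= M -> - M <= z <= M.
Proof. intros. pose proof (Rle_abs z); pose proof (Rle_abs (-z)); rewrite Rabs_Ropp in *; lra. Qed.

Lemma lnQ_ge s t c : 0 < s -> 0 < c -> c <= (t^2 + (s+2)^2) / (t^2 + s^2) -> ln c / 2 <= lam s t.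
Proof. intros Hs Hc H. unfold lam. apply Rmult_le_compat_r. lra. apply ln_le; auto. Qed.

Lemma lam_big s t M : 0 < s -> s = exp (- M) -> t^2 < s^2 -> M <= lam s t.
Proof.
  intros Hs HsM Ht.
  assert (Hl : ln (/ (s^2)) / 2 = M).
  { rewrite ln_Rinv by nra. rewrite ln_pow by auto. rewrite HsM, ln_exp. simpl. field. }
  rewrite <- Hl. apply lnQ_ge; auto. apply Rinv_0_lt_compat; nra.
  replace (/ s^2) with (1 / s^2) by (field; lra).
  apply div_le_div. nra. nra. nra.
Qed.

Lemma lam_ln s t : 0 < s -> s^2 <= t^2 -> - ln (t^2) / 2 <= lam s t.
Proof.
  intros Hs Ht. rewrite <- ln_Rinv by nra.
  apply lnQ_ge; auto. apply Rinv_0_lt_compat; nra.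
  replace (/ t^2) with (1 / t^2) by (field; nra).
  apply div_le_div. nra. nra. nra.
Qed.

Lemma lnab a u w L1 L2 : 0 < u -> 0 < w -> u <= a -> w <= a -> a <= 25 ->
  - ln u / 2 <= L1 -> - ln w / 2 <= L2 -> 0 <= L1 -> 0 <= L2 -> Rabs (ln a) <= 24 + L1 + L2.
Proof.
  intros Hu Hw Hua Hwa Ha H1 H2 H3 H4.
  destruct (Rle_lt_dec 1 a) as [Ha1|Ha1].
  - assert (0 <= ln a) by (rewrite <- ln_1; apply ln_le; lra).
    pose proof (ln_le_sub1 a ltac:(lra)). rewrite Rabs_right; lra.
  - assert (ln a < 0) by (rewrite <- ln_1; apply ln_increasing; lra).
    rewrite Rabs_left by lra.
    assert (ln (u * w) <= ln (a * a)) by (apply ln_le; nra).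
    rewrite !ln_mult in H0 by lra. lra.
Qed.

Lemma nearL x y v M s : 0 <= M -> Rabs v <= M -> 0 < s -> s = exp (- M) ->
  1 + x^2 + y^2 < 4 * Rabs x ->
  phi ((x-1)^2 + y^2) ((x+1)^2 + y^2) v <= 48 + lam s (x + -1) + lam s (x + 1) + 2 * lam s y.
Proof.
  intros HM Hv Hs HsM Hn.
  pose proof (lam_pos s (x + -1) Hs). pose proof (lam_pos s (x + 1) Hs). pose proof (lam_pos s y Hs).
  pose proof (pow2_ge_0 (x-1)). pose proof (pow2_ge_0 (x+1)). pose proof (pow2_ge_0 y).
  pose proof (pow2_ge_0 (x + -1)).
  assert (Hab : 0 < (x-1)^2+y^2 + ((x+1)^2+y^2)) by nra.
  assert (Ha0 : 0 <= (x-1)^2+y^2) by lra. assert (Hb0 : 0 <= (x+1)^2+y^2) by lra.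
  pose proof (phi_M ((x-1)^2 + y^2) ((x+1)^2 + y^2) v M Ha0 Hb0 Hab Hv) as HpM.
  apply absle in HpM.
  assert (Hx4 : Rabs x < 4) by (pose proof (Rabs_pos x); rewrite <- pow2_abs in Hn; nra).
  assert (Hxx : -4 < x < 4) by (pose proof (Rle_abs x); pose proof (Rle_abs (-x)); rewrite Rabs_Ropp in *; lra).
  destruct (Rlt_le_dec ((x + -1)^2) (s^2)) as [C1|C1].
  { pose proof (lam_big s _ M Hs HsM C1). lra. }
  destruct (Rlt_le_dec ((x + 1)^2) (s^2)) as [C2|C2].
  { pose proof (lam_big s _ M Hs HsM C2). lra. }
  destruct (Rlt_le_dec (y^2) (s^2)) as [C3|C3].
  { pose proof (lam_big s _ M Hs HsM C3). lra. }
  destruct (Rle_lt_dec (phi ((x-1)^2 + y^2) ((x+1)^2 + y^2) v) 0) as [Hp|Hp]. lra.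
  assert (Ha : 0 < (x-1)^2 + y^2) by nra. assert (Hb : 0 < (x+1)^2 + y^2) by nra.
  pose proof (P2 _ _ v Ha Hb Hp) as HP2.
  pose proof (phi_M ((x-1)^2 + y^2) ((x+1)^2 + y^2) v (Rabs v) Ha0 Hb0 Hab (Rle_refl _)) as Hpv.
  apply absle in Hpv.
  assert (Hla : Rabs (ln ((x-1)^2 + y^2)) <= 24 + lam s (x + -1) + lam s y).
  { apply (lnab _ ((x + -1)^2) (y^2)); try nra.
    - apply lam_ln; auto.
    - apply lam_ln; auto. }
  assert (Hlb : Rabs (ln ((x+1)^2 + y^2)) <= 24 + lam s (x + 1) + lam s y).
  { apply (lnab _ ((x + 1)^2) (y^2)); try nra.
    - apply lam_ln; auto.
    - apply lam_ln; auto. }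
  set (A := ln ((x - 1) ^ 2 + y ^ 2)) in *. set (B := ln ((x + 1) ^ 2 + y ^ 2)) in *.
  assert (Rabs (B - A) <= Rabs B + Rabs A).
  { rewrite <- (Rabs_Ropp A). replace (B - A) with (B + - A) by ring. apply Rabs_triang. }
  lra.
Qed.


Definition Dd eps x y := / (1 + eps^2 * (x^2 + y^2))^2.
Definition Phi s eps x y := 16 * (Ec 1 x * Ec eps y) + 13872 * (Ec 1 x * Ec 1 y)
  + 17 * ((lam s (x + -1) + lam s (x + 1)) * Ec 1 y) + 34 * (Ec 1 x * lam s y).

Lemma Dd_pos eps x y : 0 < Dd eps x y.
Proof. unfold Dd. apply Rinv_0_lt_compat. pose proof (pow2_ge_0 x). pose proof (pow2_ge_0 y).
  pose proof (pow2_ge_0 eps). apply pow_lt. nra. Qed.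

Lemma Dd_le1 eps x y : Dd eps x y <= 1.
Proof. unfold Dd. pose proof (pow2_ge_0 x). pose proof (pow2_ge_0 y). pose proof (pow2_ge_0 eps).
  rewrite <- Rinv_1. apply Rinv_le_contravar. lra. nra. Qed.

Lemma Dd_le_E eps x y : Dd eps x y <= Ec eps y.
Proof. unfold Dd, Ec. pose proof (pow2_ge_0 x). pose proof (pow2_ge_0 y). pose proof (pow2_ge_0 eps).
  apply Rinv_le_contravar. nra. assert (0 <= eps^2 * x^2) by nra. assert (0 <= eps^2 * y^2) by nra. nra. Qed.

Lemma Dd_le_EE eps x y : Dd eps x y <= Ec eps x * Ec eps y.
Proof. unfold Dd, Ec. pose proof (pow2_ge_0 x). pose proof (pow2_ge_0 y). pose proof (pow2_ge_0 eps).
  assert (0 <= eps^2 * x^2) by nra. assert (0 <= eps^2 * y^2) by nra.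
  rewrite <- Rinv_mult. apply Rinv_le_contravar. nra. nra. Qed.

Lemma Ec_ge t : t^2 <= 16 -> / 17 <= Ec 1 t.
Proof. intros. unfold Ec. apply Rinv_le_contravar. pose proof (pow2_ge_0 t). nra. nra. Qed.

Lemma Ec_le1 c t : Ec c t <= 1.
Proof. unfold Ec. pose proof (pow2_ge_0 t). pose proof (pow2_ge_0 c). rewrite <- Rinv_1.
  apply Rinv_le_contravar. lra. nra. Qed.

Lemma point eps x y v M s : 0 <= M -> Rabs v <= M -> 0 < s -> s = exp (- M) ->
  phi ((x-1)^2 + y^2) ((x+1)^2 + y^2) v * Dd eps x y <= Phi s eps x y.
Proof.
  intros HM Hv Hs HsM.
  pose proof (Dd_pos eps x y). pose proof (Dd_le1 eps x y). pose proof (Dd_le_E eps x y).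
  pose proof (lam_pos s (x + -1) Hs). pose proof (lam_pos s (x + 1) Hs). pose proof (lam_pos s y Hs).
  pose proof (Ec_pos 1 x). pose proof (Ec_pos 1 y). pose proof (Ec_pos eps y).
  assert (T1 : 0 <= 16 * (Ec 1 x * Ec eps y)) by nra.
  assert (T2 : 0 <= 13872 * (Ec 1 x * Ec 1 y)) by nra.
  assert (T3 : 0 <= 17 * ((lam s (x + -1) + lam s (x + 1)) * Ec 1 y)) by nra.
  assert (T4 : 0 <= 34 * (Ec 1 x * lam s y)) by nra.
  unfold Phi.
  set (p := phi _ _ v).
  destruct (Rle_lt_dec p 0) as [Hp|Hp]. nra.
  pose proof (pow2_ge_0 x) as X2. pose proof (pow2_ge_0 y) as Y2.
  destruct (Rle_lt_dec (4 * Rabs x) (1 + x^2 + y^2)) as [Far|Near].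
  - pose proof (farL (1 + x^2 + y^2) x v ltac:(lra) Far) as HF.
    replace (1 + x ^ 2 + y ^ 2 - 2 * x) with ((x-1)^2 + y^2) in HF by ring.
    replace (1 + x ^ 2 + y ^ 2 + 2 * x) with ((x+1)^2 + y^2) in HF by ring.
    fold p in HF.
    assert (Hx : 16 * x ^ 2 / (1 + x ^ 2 + y ^ 2) ^ 2 <= 16 * Ec 1 x).
    { unfold Ec. unfold Rdiv. rewrite Rmult_assoc. apply Rmult_le_compat_l. lra.
      apply (Rmult_le_reg_r ((1 + x ^ 2 + y ^ 2) ^ 2)). nra. rewrite Rmult_assoc, Rinv_l by nra.
      apply (Rmult_le_reg_l (1 + 1^2 * x^2)). nra.
      replace ((1 + 1 ^ 2 * x ^ 2) * (/ (1 + 1 ^ 2 * x ^ 2) * (1 + x ^ 2 + y ^ 2) ^ 2)) with ((1 + x ^ 2 + y ^ 2) ^ 2) by (field; nra).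
      nra. }
    assert (p * Dd eps x y <= 16 * Ec 1 x * Ec eps y).
    { apply Rle_trans with (16 * x ^ 2 / (1 + x ^ 2 + y ^ 2) ^ 2 * Dd eps x y).
      apply Rmult_le_compat_r; lra.
      apply Rmult_le_compat; try lra. }
    nra.
  - pose proof (nearL x y v M s HM Hv Hs HsM Near) as HN. fold p in HN.
    pose proof (Rabs_pos x) as Ha. rewrite <- pow2_abs in Near. rewrite <- pow2_abs in X2.
    assert (Ha4 : Rabs x < 4) by nra.
    assert (Hx : x^2 <= 16) by (rewrite <- pow2_abs; nra).
    assert (Hy : y^2 <= 16) by nra.
    pose proof (Ec_ge x Hx). pose proof (Ec_ge y Hy).
    assert (p * Dd eps x y <= p) by nra.
    assert (48 <= 13872 * (Ec 1 x * Ec 1 y)).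
    { apply Rle_trans with (13872 * (/17 * /17)). lra. apply Rmult_le_compat_l. lra.
      apply Rmult_le_compat; try lra; left; apply Rinv_0_lt_compat; lra. }
    assert (lam s (x + -1) + lam s (x + 1) <= 17 * ((lam s (x + -1) + lam s (x + 1)) * Ec 1 y)) by nra.
    assert (2 * lam s y <= 34 * (Ec 1 x * lam s y)) by nra.
    lra.
Qed.


Lemma bnd_sq f : ct2 f -> exists M, forall x y, -1 <= x <= 1 -> -1 <= y <= 1 -> Rabs (f x y) <= M.
Proof.
  intros Hf.
  destruct (uniform_continuity_2d f (-1) 1 (-1) 1 (fun x y _ _ => Hf x y) (mkposreal 1 Rlt_0_1)) as [d Hd].
  assert (Hd0 := cond_pos d).
  assert (Hind : forall n : nat, forall x y, -1 <= x <= 1 -> -1 <= y <= 1 ->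
            Rabs x <= INR n * (d/2) -> Rabs y <= INR n * (d/2) -> Rabs (f x y) <= Rabs (f 0 0) + INR n).
  { induction n as [|n IH]; intros x y Hx Hy Hax Hay.
    - simpl in Hax, Hay. rewrite Rmult_0_l in Hax, Hay.
      assert (x = 0) by (pose proof (Rabs_pos x); apply Rabs_eq_0; lra).
      assert (y = 0) by (pose proof (Rabs_pos y); apply Rabs_eq_0; lra). subst. simpl. lra.
    - rewrite S_INR in *. set (k := INR n / (INR n + 1)).
      pose proof (pos_INR n).
      assert (Hk : 0 <= k <= 1). { unfold k. split. apply Rmult_le_pos; [lra| left; apply Rinv_0_lt_compat; lra].
        apply (Rmult_le_reg_r (INR n + 1)). lra. unfold Rdiv. rewrite Rmult_assoc, Rinv_l by lra. lra. }
      assert (Hkx : Rabs (k * x) <= INR n * (d/2)).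
      { rewrite Rabs_mult, (Rabs_right k) by lra. unfold k.
        apply (Rmult_le_reg_r (INR n + 1)). lra.
        replace (INR n / (INR n + 1) * Rabs x * (INR n + 1)) with (INR n * Rabs x) by (field; lra).
        replace (INR n * (d / 2) * (INR n + 1)) with (INR n * ((INR n + 1) * (d/2))) by ring.
        apply Rmult_le_compat_l; lra. }
      assert (Hky : Rabs (k * y) <= INR n * (d/2)).
      { rewrite Rabs_mult, (Rabs_right k) by lra. unfold k.
        apply (Rmult_le_reg_r (INR n + 1)). lra.
        replace (INR n / (INR n + 1) * Rabs y * (INR n + 1)) with (INR n * Rabs y) by (field; lra).
        replace (INR n * (d / 2) * (INR n + 1)) with (INR n * ((INR n + 1) * (d/2))) by ring.
        apply Rmult_le_compat_l; lra. }
      assert (H1k : 1 - k = / (INR n + 1)) by (unfold k; field; lra).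
      assert (Hdx : Rabs (x - k * x) < d).
      { replace (x - k*x) with ((1-k) * x) by ring. rewrite Rabs_mult, H1k, Rabs_inv, (Rabs_right (INR n + 1)) by lra.
        apply (Rmult_lt_reg_l (INR n + 1)). lra. rewrite <- Rmult_assoc, Rinv_r, Rmult_1_l by lra. nra. }
      assert (Hdy : Rabs (y - k * y) < d).
      { replace (y - k*y) with ((1-k) * y) by ring. rewrite Rabs_mult, H1k, Rabs_inv, (Rabs_right (INR n + 1)) by lra.
        apply (Rmult_lt_reg_l (INR n + 1)). lra. rewrite <- Rmult_assoc, Rinv_r, Rmult_1_l by lra. nra. }
      assert (Hkx' : -1 <= k * x <= 1) by (split; nra).
      assert (Hky' : -1 <= k * y <= 1) by (split; nra).
      specialize (IH (k*x) (k*y) Hkx' Hky' Hkx Hky).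
      pose proof (Hd (k*x) (k*y) x y Hkx' Hky' Hx Hy Hdx Hdy). simpl in H0.
      pose proof (Rabs_triang_inv (f x y) (f (k*x) (k*y))). lra. }
  destruct (archimed (2 / d)) as [Ha _].
  set (n := Z.to_nat (up (2/d))).
  assert (Hn : 2 / d <= INR n).
  { unfold n. rewrite INR_IZR_INZ, Z2Nat.id. lra. apply le_IZR. assert (0 < 2 / d) by (apply Rdiv_lt_0_compat; lra). lra. }
  exists (Rabs (f 0 0) + INR n). intros x y Hx Hy. apply Hind; auto.
  - assert (1 <= INR n * (d/2)). { apply (Rmult_le_reg_r (2/d)). apply Rdiv_lt_0_compat; lra.
      replace (INR n * (d / 2) * (2 / d)) with (INR n) by (field; lra). lra. }
    pose proof (Rle_abs x); pose proof (Rle_abs (-x)); rewrite Rabs_Ropp in *. apply Rabs_le; lra.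
  - assert (1 <= INR n * (d/2)). { apply (Rmult_le_reg_r (2/d)). apply Rdiv_lt_0_compat; lra.
      replace (INR n * (d / 2) * (2 / d)) with (INR n) by (field; lra). lra. }
    apply Rabs_le; lra.
Qed.


Lemma h_bnd h : smooth_on_S2 h -> ct2 h /\ exists M, 0 <= M /\ forall x y, Rabs (h x y) <= M.
Proof.
  intros [Hh [g [Hg Hgh]]].
  assert (Ch : ct2 h) by (apply ct2_cont2; exact (Hh 0%nat)).
  assert (Cg : ct2 g) by (apply ct2_cont2; exact (Hg 0%nat)).
  split; auto.
  destruct (bnd_sq h Ch) as [M1 H1]. destruct (bnd_sq g Cg) as [M2 H2].
  exists (Rabs M1 + Rabs M2). split. pose proof (Rabs_pos M1); pose proof (Rabs_pos M2); lra.
  intros x y. pose proof (Rle_abs M1). pose proof (Rle_abs M2). pose proof (Rabs_pos M1); pose proof (Rabs_pos M2).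
  destruct (Rle_lt_dec (Rabs x) 1) as [Hx|Hx]; [destruct (Rle_lt_dec (Rabs y) 1) as [Hy|Hy]|].
  - apply Rabs_le_between in Hx. apply Rabs_le_between in Hy. specialize (H1 x y Hx Hy). lra.
  - assert (Hr : 1 < x^2 + y^2) by (rewrite <- (pow2_abs y); pose proof (pow2_ge_0 x); nra).
    set (u := x / (x^2+y^2)). set (v := - y / (x^2+y^2)).
    assert (Huv : u^2 + v^2 = / (x^2+y^2)) by (unfold u, v; field; lra).
    assert (Hv0 : v <> 0). { unfold v. intros Hc. assert (y = 0). { apply (f_equal (fun z => z * (x^2+y^2))) in Hc. field_simplify in Hc; lra. }
      subst. rewrite Rabs_R0 in Hy. lra. }
    specialize (Hgh u v (or_intror Hv0)).
    replace (u / (u^2+v^2)) with x in Hgh by (rewrite Huv; unfold u; field; lra).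
    replace (- v / (u^2+v^2)) with y in Hgh by (rewrite Huv; unfold v; field; lra).
    assert (Hu1 : u^2 <= 1). { unfold u. replace ((x / (x ^ 2 + y ^ 2)) ^ 2) with (x^2 / (x^2+y^2) * / (x^2+y^2)) by (field; lra).
      assert (x^2/(x^2+y^2) <= 1). { apply (Rmult_le_reg_r (x^2+y^2)). lra. unfold Rdiv; rewrite Rmult_assoc, Rinv_l by lra. pose proof (pow2_ge_0 y); lra. }
      assert (/ (x^2+y^2) <= 1) by (rewrite <- Rinv_1; apply Rinv_le_contravar; lra).
      assert (0 <= x^2/(x^2+y^2)) by (apply Rmult_le_pos; [apply pow2_ge_0|left; apply Rinv_0_lt_compat; lra]).
      nra. }
    assert (Hv1 : v^2 <= 1). { assert (v^2 <= / (x^2+y^2)) by (pose proof (pow2_ge_0 u); lra).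
      assert (/ (x^2+y^2) <= 1) by (rewrite <- Rinv_1; apply Rinv_le_contravar; lra). lra. }
    assert (Hu2 : -1 <= u <= 1) by (split; nra). assert (Hv2 : -1 <= v <= 1) by (split; nra).
    specialize (H2 u v Hu2 Hv2). rewrite Hgh in H2. lra.
  - assert (Hr : 1 < x^2 + y^2) by (rewrite <- (pow2_abs x); pose proof (pow2_ge_0 y); nra).
    set (u := x / (x^2+y^2)). set (v := - y / (x^2+y^2)).
    assert (Huv : u^2 + v^2 = / (x^2+y^2)) by (unfold u, v; field; lra).
    assert (Hu0 : u <> 0). { unfold u. intros Hc. assert (x = 0). { apply (f_equal (fun z => z * (x^2+y^2))) in Hc. field_simplify in Hc; lra. }
      subst. rewrite Rabs_R0 in Hx. lra. }
    specialize (Hgh u v (or_introl Hu0)).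
    replace (u / (u^2+v^2)) with x in Hgh by (rewrite Huv; unfold u; field; lra).
    replace (- v / (u^2+v^2)) with y in Hgh by (rewrite Huv; unfold v; field; lra).
    assert (Hu1 : u^2 <= 1). { assert (u^2 <= / (x^2+y^2)) by (pose proof (pow2_ge_0 v); lra).
      assert (/ (x^2+y^2) <= 1) by (rewrite <- Rinv_1; apply Rinv_le_contravar; lra). lra. }
    assert (Hv1 : v^2 <= 1). { assert (v^2 <= / (x^2+y^2)) by (pose proof (pow2_ge_0 u); lra).
      assert (/ (x^2+y^2) <= 1) by (rewrite <- Rinv_1; apply Rinv_le_contravar; lra). lra. }
    assert (Hu2 : -1 <= u <= 1) by (split; nra). assert (Hv2 : -1 <= v <= 1) by (split; nra).
    specialize (H2 u v Hu2 Hv2). rewrite Hgh in H2. lra.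
Qed.

Lemma ct2_x : ct2 (fun x y => x). Proof. intros x y; apply continuity_2d_pt_id1. Qed.
Lemma ct2_y : ct2 (fun x y => y). Proof. intros x y; apply continuity_2d_pt_id2. Qed.
Lemma ct2_opp f : ct2 f -> ct2 (fun x y => - f x y).
Proof. intros H x y; apply continuity_2d_pt_opp; auto. Qed.
Lemma ct2_inv f : ct2 f -> (forall x y, f x y <> 0) -> ct2 (fun x y => / f x y).
Proof. intros H H0 x y; apply continuity_2d_pt_inv; auto. Qed.
Lemma ct2_exp f : ct2 f -> ct2 (fun x y => exp (f x y)).
Proof. intros H x y. apply (continuity_1d_2d_pt_comp exp f). apply derivable_continuous_pt, derivable_pt_exp. auto. Qed.
Lemma ct2_pow2 f : ct2 f -> ct2 (fun x y => f x y ^ 2).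
Proof. intros H x y. apply (continuity_2d_pt_ext (fun x y => f x y * f x y)). intros; ring.
  apply continuity_2d_pt_mult; auto. Qed.

Definition Kf (k : R) (eps : R) (h : R -> R -> R) x y :=
  k * (phi ((x-1)^2 + y^2) ((x+1)^2 + y^2) (h x y) * Dd eps x y).

Lemma ct2_K k eps h : ct2 h -> ct2 (Kf k eps h).
Proof.
  intros Hh. unfold Kf, phi, Dd.
  assert (Ca : ct2 (fun x y => (x-1)^2 + y^2)) by (apply ct2_plus; apply ct2_pow2; [apply ct2_minus; [apply ct2_x|apply ct2_const]|apply ct2_y]).
  assert (Cb : ct2 (fun x y => (x+1)^2 + y^2)) by (apply ct2_plus; apply ct2_pow2; [apply ct2_plus; [apply ct2_x|apply ct2_const]|apply ct2_y]).
  assert (Ce : ct2 (fun x y => exp (h x y))) by (apply ct2_exp; auto).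
  apply ct2_mult. apply ct2_const. apply ct2_mult. apply ct2_mult.
  - apply ct2_opp. unfold Rdiv. apply ct2_mult.
    + apply ct2_minus; auto. apply ct2_mult; auto.
    + apply ct2_inv. apply ct2_plus; auto. apply ct2_mult; auto.
      intros x y. pose proof (exp_pos (h x y)). pose proof (pow2_ge_0 (x-1)). pose proof (pow2_ge_0 (x+1)). pose proof (pow2_ge_0 y).
      assert (0 < (x-1)^2 + (x+1)^2) by nra. nra.
  - exact Hh.
  - apply ct2_inv. apply ct2_pow2. apply ct2_plus. apply ct2_const. apply ct2_mult. apply ct2_const.
    apply ct2_plus; apply ct2_pow2; [apply ct2_x|apply ct2_y].
    intros x y. pose proof (pow2_ge_0 x). pose proof (pow2_ge_0 y). pose proof (pow2_ge_0 eps).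
    apply pow_nonzero. nra.
Qed.

Lemma lam_shift_cont s c x : 0 < s -> continuity_pt (fun t => lam s (t + c)) x.
Proof. intros Hs. apply exd_cpt. unfold lam. auto_derive.
  pose proof (pow2_ge_0 (x+c)). simpl in H. split. nra. split; auto.
  apply Rmult_lt_0_compat; [nra| apply Rinv_0_lt_compat; nra]. Qed.

Lemma ct2_scal k f : ct2 f -> ct2 (fun x y => k * f x y).
Proof. intros. apply ct2_mult; auto. apply ct2_const. Qed.

Lemma ct2_Phi s eps : 0 < s -> ct2 (Phi s eps).
Proof.
  intros Hs. unfold Phi. repeat apply ct2_plus; apply ct2_scal, ct2_sep; try apply Ec_cont.
  intros x. apply (continuity_pt_plus (fun t => lam s (t + -1)) (fun t => lam s (t + 1))); apply lam_shift_cont; lra.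
  intros; apply lam_cont; lra.
Qed.

Lemma SI_Phi s eps r : 0 < s <= 1 -> 0 < eps <= 1 -> 0 <= r -> SI (Phi s eps) r <= 230000 / eps.
Proof.
  intros Hs He Hr.
  set (a1 := fun x y => 16 * (Ec 1 x * Ec eps y)).
  set (a2 := fun x y => 13872 * (Ec 1 x * Ec 1 y)).
  set (a3 := fun x y => 17 * ((lam s (x + -1) + lam s (x + 1)) * Ec 1 y)).
  set (a4 := fun x y => 34 * (Ec 1 x * lam s y)).
  assert (Cl : forall x, continuity_pt (fun t => lam s (t + -1) + lam s (t + 1)) x).
  { intros x. apply (continuity_pt_plus (fun t => lam s (t + -1)) (fun t => lam s (t + 1))); apply lam_shift_cont; lra. }
  assert (C1 : ct2 a1) by (apply ct2_scal, ct2_sep; apply Ec_cont).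
  assert (C2 : ct2 a2) by (apply ct2_scal, ct2_sep; apply Ec_cont).
  assert (C3 : ct2 a3) by (apply ct2_scal, ct2_sep; [apply Cl | apply Ec_cont]).
  assert (C4 : ct2 a4) by (apply ct2_scal, ct2_sep; [apply Ec_cont | intros; apply lam_cont; lra]).
  assert (EPhi : Phi s eps = fun x y => a1 x y + a2 x y + a3 x y + a4 x y) by reflexivity.
  rewrite EPhi.
  rewrite (SI_plus (fun x y => a1 x y + a2 x y + a3 x y) a4) by (auto; repeat apply ct2_plus; auto).
  rewrite (SI_plus (fun x y => a1 x y + a2 x y) a3) by (auto; repeat apply ct2_plus; auto).
  rewrite (SI_plus a1 a2) by auto.
  unfold a1, a2, a3, a4.
  rewrite (SI_scal (fun x y => Ec 1 x * Ec eps y)) by (auto; apply ct2_sep; apply Ec_cont).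
  rewrite (SI_scal (fun x y => Ec 1 x * Ec 1 y)) by (auto; apply ct2_sep; apply Ec_cont).
  rewrite (SI_scal (fun x y => (lam s (x + -1) + lam s (x + 1)) * Ec 1 y)) by (first [assumption | apply ct2_sep; [apply Cl|apply Ec_cont]]).
  rewrite (SI_scal (fun x y => Ec 1 x * lam s y)) by (first [assumption | apply ct2_sep; [apply Ec_cont|intros; apply lam_cont; lra]]).
  rewrite (SI_sep (Ec 1) (Ec eps)) by apply Ec_cont.
  rewrite (SI_sep (Ec 1) (Ec 1)) by apply Ec_cont.
  rewrite (SI_sep (fun x => lam s (x + -1) + lam s (x + 1)) (Ec 1)) by (try apply Cl; apply Ec_cont).
  rewrite (SI_sep (Ec 1) (lam s)) by (try apply Ec_cont; intros; apply lam_cont; lra).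
  rewrite RInt_plusR by (apply ex_RInt_cpt; intros; apply lam_shift_cont; lra).
  destruct (int_E 1 r ltac:(lra) Hr) as [E1a E1b].
  destruct (int_E eps r ltac:(lra) Hr) as [E2a E2b].
  pose proof (int_lam_shift s (-1) r Hs Hr) as L1. pose proof (int_lam_shift s 1 r Hs Hr) as L2.
  assert (Hl0 : forall v, 0 <= RInt (fun x => lam s (x + v)) (-r) r).
  { intros v. apply RInt_ge_0. lra. apply ex_RInt_cpt; intros; apply lam_shift_cont; lra.
    intros; apply lam_pos; lra. }
  pose proof (Hl0 (-1)) as L1'. pose proof (Hl0 1) as L2'.
  pose proof (Hl0 0) as L3'.
  assert (L3 : RInt (lam s) (-r) r <= 27) by (apply int_lam; auto).
  assert (L3'' : 0 <= RInt (lam s) (-r) r).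
  { apply RInt_ge_0. lra. apply ex_RInt_cpt; intros; apply lam_cont; lra. intros; apply lam_pos; lra. }
  pose proof PI_4. pose proof PI_RGT_0.
  replace (PI / 1) with PI in E1b by field.
  set (I1 := RInt (Ec 1) (-r) r) in *. set (I2 := RInt (Ec eps) (-r) r) in *.
  set (J1 := RInt (fun x => lam s (x + -1)) (-r) r) in *.
  set (J2 := RInt (fun x => lam s (x + 1)) (-r) r) in *.
  set (J3 := RInt (lam s) (-r) r) in *.
  assert (I2 <= 4 / eps). { eapply Rle_trans. apply E2b. unfold Rdiv. apply Rmult_le_compat_r; [left; apply Rinv_0_lt_compat|]; lra. }
  assert (1 <= / eps). { rewrite <- Rinv_1. apply Rinv_le_contravar; lra. }
  assert (0 < / eps) by (apply Rinv_0_lt_compat; lra).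
  unfold Rdiv in *.
  assert (I1 * I2 <= 16 * / eps) by nra.
  assert (I1 * I1 <= 16 * / eps) by nra.
  assert ((J1 + J2) * I1 <= 216 * / eps) by nra.
  assert (I1 * J3 <= 108 * / eps) by nra.
  nra.
Qed.

Theorem mainTheorem10 :
  forall Rad : R, 0 < Rad ->
  exists C : R, 0 < C /\
    forall eps : R, 0 < eps <= 1 ->
    forall h L : R -> R -> R,
      smooth_on_S2 h ->
      is_flat_laplacian h L ->
      hat_h_equation Rad eps h L ->
      exists I : R, L2S2_pairing_minus_lap h L I /\ I <= C * eps.
Proof.
  intros Rad HR. exists (1840000 * Rad^2). split. nra.
  intros eps He h L Hs _ Heq.
  destruct (h_bnd h Hs) as [Ch [M [HM Hb]]].
  set (k := 8 * Rad^2 * eps^2).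
  assert (Hk : 0 <= k) by (unfold k; pose proof (pow2_ge_0 Rad); pose proof (pow2_ge_0 eps); nra).
  set (s := exp (- M)).
  assert (Hs0 : 0 < s) by apply exp_pos.
  assert (Hs1 : s <= 1) by (apply exp_le1; lra).
  assert (Efun : (fun x y => h x y * (- lapS2 L x y) * areaS2 x y) = Kf k eps h).
  { apply functional_extensionality; intros x. apply functional_extensionality; intros y.
    specialize (Heq x y).
    replace (- lapS2 L x y) with (- (2 * Rad ^ 2 * eps ^ 2 * f_eps eps x y ^ 2 * Fwv x y (h x y))) by lra.
    unfold Kf, k, phi, Dd, f_eps, areaS2, Fwv.
    pose proof (exp_pos (h x y)). pose proof (pow2_ge_0 (x-1)). pose proof (pow2_ge_0 (x+1)). pose proof (pow2_ge_0 y).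
    pose proof (pow2_ge_0 x). pose proof (pow2_ge_0 eps).
    assert (0 < (x-1)^2 + (x+1)^2) by nra.
    assert (0 < ((x - 1) ^ 2 + y ^ 2) * exp (h x y) + ((x + 1) ^ 2 + y ^ 2)) by nra.
    assert (0 < 1 + eps ^ 2 * (x ^ 2 + y ^ 2)) by nra.
    field. repeat split; nra. }
  unfold L2S2_pairing_minus_lap. rewrite Efun.
  apply (plane_from_bound (Kf k eps h) (fun x y => (k * M) * (Ec eps x * Ec eps y)) (k * M * (PI / eps) * (PI / eps))).
  - apply ct2_K; auto.
  - apply ct2_scal, ct2_sep; apply Ec_cont.
  - intros x y. unfold Kf. pose proof (Dd_pos eps x y). pose proof (Dd_le_EE eps x y).
    pose proof (Ec_pos eps x). pose proof (Ec_pos eps y).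
    assert (Hab : 0 < (x-1)^2+y^2 + ((x+1)^2+y^2)) by (pose proof (pow2_ge_0 (x-1)); pose proof (pow2_ge_0 (x+1)); pose proof (pow2_ge_0 y); nra).
    pose proof (phi_M ((x-1)^2+y^2) ((x+1)^2+y^2) (h x y) M
       ltac:(pose proof (pow2_ge_0 (x-1)); pose proof (pow2_ge_0 y); lra)
       ltac:(pose proof (pow2_ge_0 (x+1)); pose proof (pow2_ge_0 y); lra) Hab (Hb x y)).
    rewrite !Rabs_mult, (Rabs_right k), (Rabs_right (Dd eps x y)) by lra.
    rewrite Rmult_assoc. apply Rmult_le_compat_l. lra.
    apply Rmult_le_compat; try lra. apply Rabs_pos.
  - intros r Hr. rewrite SI_scal by (auto; apply ct2_sep; apply Ec_cont).
    rewrite SI_sep by apply Ec_cont.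
    destruct (int_E eps r ltac:(lra) Hr) as [E1 E2].
    assert (0 <= k * M) by nra.
    rewrite !Rmult_assoc. apply Rmult_le_compat_l. auto.
    apply Rmult_le_compat_l; auto. apply Rmult_le_compat; lra.
  - intros r Hr.
    eapply Rle_trans. apply (SI_le _ (fun x y => k * Phi s eps x y)); auto.
    apply ct2_K; auto.
    apply ct2_scal, ct2_Phi; auto.
    intros x y. unfold Kf. apply Rmult_le_compat_l; auto. apply point with M; auto.
    rewrite SI_scal by (first [assumption | apply ct2_Phi; auto]).
    pose proof (SI_Phi s eps r ltac:(lra) He Hr).
    eapply Rle_trans. apply Rmult_le_compat_l. auto. exact H.
    unfold k. right. field. lra.
Qed.
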